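(* Assume $|\Theta|>1$ and let $D^{ST}$ be any constant with $d^{\mathcal T}(\theta,\theta^{\mathcal T}_* )\le d^{\mathcal S}(\theta,\theta^{\mathcal S}_* )+D^{ST}$ for all $\theta\in\Theta$. With $\hat\theta\in\arg\min_{\theta}\min_M\widehat{\mathcal R}^{\mathcal S}_{\theta,M}$ and $\Delta\mathcal R^{\mathcal S\to\mathcal T}=\mathcal R^{\mathcal T}_{\hat\theta,\widehat M^{\mathcal T}_{\hat\theta}}-\min_\theta\mathcal R^{\mathcal T}_\theta$, for every realization of the data sets, $$\Delta\mathcal R^{\mathcal S\to\mathcal T}\le2\mathcal G^{\mathcal T}_{\hat\theta}(\mathcal D^{\mathcal T})+d^{\mathcal S}(\hat\theta,\theta^{\mathcal S}_* )+D^{ST}\le2\mathcal G^{\mathcal T}_{\hat\theta}(\mathcal D^{\mathcal T})+\sup_{\theta\in\Theta}\mathcal G^{\mathcal S}_\theta(\mathcal D^{\mathcal S})+\mathcal G^{\mathcal S}_{\theta^{\mathcal S}_*}(\mathcal D^{\mathcal S})+D^{ST}.$$ If instead $\Theta=\{\theta\}$ is a singleton, then $\Delta\mathcal R^{\mathcal S\to\mathcal T}\le2\mathcal G^{\mathcal T}_\theta(\mathcal D^{\mathcal T})$.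
   Context: $\mathcal X$ finite, labels $c\in\{0,1\}$, $\Theta$ arbitrary, $\rho_\theta(x)$ density matrices on $\mathbb C^n$, $\mathcal M$ the binary POVMs $M=(M_0,M_1)$, $M_c\succeq0$, $M_0+M_1=I$; loss $\ell_{\theta,M}(c,x)=1-\mathrm{Tr}(M_c\rho_\theta(x))$. For task $\mathcal A\in\{\mathcal S,\mathcal T\}$ with distribution $p^{\mathcal A}(c,x)$ and finite data set $\mathcal D^{\mathcal A}$ of $N^{\mathcal A}$ samples: $\mathcal R^{\mathcal A}_{\theta,M}=\mathbb E_{p^{\mathcal A}}[\ell_{\theta,M}]$, $\mathcal R^{\mathcal A}_\theta=\min_M\mathcal R^{\mathcal A}_{\theta,M}$, $\widehat{\mathcal R}^{\mathcal A}_{\theta,M}=\frac1{N^{\mathcal A}}\sum_{(c,x)\in\mathcal D^{\mathcal A}}\ell_{\theta,M}(c,x)$, $\widehat M^{\mathcal A}_\theta\in\arg\min_M\widehat{\mathcal R}^{\mathcal A}_{\theta,M}$, $\theta^{\mathcal A}_*\in\arg\min_\theta\mathcal R^{\mathcal A}_\theta$ (minimizers assumed to exist). Task distance $d^{\mathcal A}(\theta,\theta')=|\mathcal R^{\mathcal A}_{\theta'}-\mathcal R^{\mathcal A}_\theta|$. Generalization error $\mathcal G^{\mathcal A}_\theta(\mathcal D^{\mathcal A})=\sup_{M\in\mathcal M}|\mathcal R^{\mathcal A}_{\theta,M}-\widehat{\mathcal R}^{\mathcal A}_{\theta,M}|$. *)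

(* Defs.v *)
From HB Require Import structures.
From mathcomp Require Import all_boot all_order all_algebra.
From mathcomp Require Import complex.
From mathcomp Require Import classical_sets reals.

Set Implicit Arguments.
Unset Strict Implicit.
Unset Printing Implicit Defensive.

Import Order.TTheory GRing.Theory Num.Theory Num.Def.
Local Open Scope ring_scope.
Local Open Scope classical_set_scope.

Section QML.
Variables (R : realType) (n : nat).

Definition psdmx (A : 'M[R[i]]_n) : Prop :=
  A \is hermsymmx /\
  forall v : 'rV[R[i]]_n, 0 <= (v *m A *m (map_mx conjC v)^T) ord0 ord0.

Definition density (A : 'M[R[i]]_n) : Prop := psdmx A /\ \tr A = 1.

Definition povm (M : 'I_2 -> 'M[R[i]]_n) : Prop :=
  (forall c, psdmx (M c)) /\ M ord0 + M (@Ordinal 2 1 isT) = 1%:M.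

Variables (X : finType) (Theta : Type) (rho : Theta -> X -> 'M[R[i]]_n).

Definition loss (th : Theta) (M : 'I_2 -> 'M[R[i]]_n) (c : 'I_2) (x : X) : R :=
  1 - complex.Re (\tr (M c *m rho th x)).

Definition is_distr (p : 'I_2 -> X -> R) : Prop :=
  (forall c x, 0 <= p c x) /\ \sum_(c : 'I_2) \sum_(x : X) p c x = 1.

Definition risk (p : 'I_2 -> X -> R) (th : Theta) (M : 'I_2 -> 'M[R[i]]_n) : R :=
  \sum_(c : 'I_2) \sum_(x : X) p c x * loss th M c x.

(* R_theta = min_M R_{theta,M} (the minimum exists, so it is the infimum) *)
Definition riskmin (p : 'I_2 -> X -> R) (th : Theta) : R :=
  inf [set risk p th M | M in povm].

Definition emprisk (D : seq ('I_2 * X)) (th : Theta) (M : 'I_2 -> 'M[R[i]]_n) : R :=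
  (size D)%:R^-1 * \sum_(s <- D) loss th M s.1 s.2.

Definition empriskmin (D : seq ('I_2 * X)) (th : Theta) : R :=
  inf [set emprisk D th M | M in povm].

Definition taskdist (p : 'I_2 -> X -> R) (th th' : Theta) : R :=
  `|riskmin p th' - riskmin p th|.

Definition generr (p : 'I_2 -> X -> R) (D : seq ('I_2 * X)) (th : Theta) : R :=
  sup [set `|risk p th M - emprisk D th M| | M in povm].

End QML.

(* Main.v *)
Require Import Defs.
From HB Require Import structures.
From mathcomp Require Import all_boot all_order all_algebra.
From mathcomp Require Import complex.
From mathcomp Require Import classical_sets reals.
From mathcomp Require Import ring lra.
Import Order.TTheory GRing.Theory Num.Theory Num.Def.
Local Open Scope ring_scope.
Local Open Scope classical_set_scope.

Set Implicit Arguments.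
Unset Strict Implicit.
Section Aux.
Import ComplexField.
Variables (R : realType) (n : nat).
Local Notation e i := (delta_mx (0:'I_1) i : 'rV[R[i]]_n).

Lemma entry (A : 'M[R[i]]_n) i j : (e i *m A *m (e j)^T) 0 0 = A i j.
Proof. by rewrite trmx_delta -rowE -colE !mxE. Qed.

Lemma map_e i : map_mx conjC (e i) = e i.
Proof. by apply/matrixP=> k l; rewrite !mxE rmorph_nat. Qed.

Lemma qform (A : 'M[R[i]]_n) i j a b :
  ((a *: e i + b *: e j) *m A *m (map_mx conjC (a *: e i + b *: e j))^T) 0 0 =
  a * conjC a * A i i + a * conjC b * A i j + b * conjC a * A j i + b * conjC b * A j j.
Proof.
rewrite map_mxD !map_mxZ !map_e linearD /= !linearZ /=.
rewrite !mulmxDl !mulmxDr -!scalemxAl -!scalemxAr !scalerA !(entry, mxE).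
ring.
Qed.

Lemma cbound (z1 z2 z3 z4 : R[i]) :
  (forall a b, 0 <= a * conjC a * z1 + a * conjC b * z2 + b * conjC a * z3 + b * conjC b * z4) ->
  [/\ `|complex.Re z2| <= complex.Re z1 + complex.Re z4,
   `|complex.Im z2| <= complex.Re z1 + complex.Re z4 &
   0 <= complex.Re z1].
Proof.
move=> H.
have H1 := H 1 0; have H2 := H 0 1; have H3 := H 1 1; have H4 := H 1 (-1);
have H5 := H 1 'i%C; have H6 := H 1 (-'i%C).
move: H1 H2 H3 H4 H5 H6; clear H.
case: z1 => x1 y1; case: z2 => x2 y2; case: z3 => x3 y3; case: z4 => x4 y4.
rewrite !lecE /=.
simpc.
move=> /andP[/eqP ? ?] /andP[/eqP ? ?] /andP[/eqP ? ?] /andP[/eqP ? ?] /andP[/eqP ? ?] /andP[/eqP ? ?].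
split; rewrite ?ler_norml; try apply/andP; try split; lra.
Qed.

Lemma ReD (x y : R[i]) : complex.Re (x + y) = complex.Re x + complex.Re y.
Proof. by case: x; case: y. Qed.

Lemma ReM (x y : R[i]) :
  complex.Re (x * y) = complex.Re x * complex.Re y - complex.Im x * complex.Im y.
Proof. by case: x => ? ?; case: y => ? ?; simpc. Qed.

Lemma Re_sum (I : Type) (r : seq I) (P : pred I) (F : I -> R[i]) :
  complex.Re (\sum_(i <- r | P i) F i) = \sum_(i <- r | P i) complex.Re (F i).
Proof. by apply: (big_morph _ ReD). Qed.

Lemma psd_bounds (A : 'M[R[i]]_n) : psdmx A -> forall i j,
  [/\ `|complex.Re (A i j)| <= complex.Re (A i i) + complex.Re (A j j),
   `|complex.Im (A i j)| <= complex.Re (A i i) + complex.Re (A j j) &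
   0 <= complex.Re (A i i)].
Proof.
move=> [_ H] i j; apply: (@cbound (A i i) (A i j) (A j i) (A j j)) => a b.
by have := H (a *: e i + b *: e j); rewrite qform.
Qed.

Lemma psd_diag_ge0 (A : 'M[R[i]]_n) : psdmx A -> forall k, 0 <= complex.Re (A k k).
Proof. by move=> hA k; have [] := psd_bounds hA k k. Qed.

Lemma dens_diag (A : 'M[R[i]]_n) : density A -> forall k, complex.Re (A k k) <= 1.
Proof.
move=> [hp htr] k.
have : complex.Re (\tr A) = 1 by rewrite htr.
rewrite /mxtrace Re_sum (bigD1 k) //=.
have : 0 <= \sum_(i < n | i != k) complex.Re (A i i).
  by apply: sumr_ge0 => i _; apply: psd_diag_ge0.
lra.
Qed.

Lemma ord2_cases (c : 'I_2) : c = ord0 \/ c = @Ordinal 2 1 isT.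
Proof.
case: c => [[|[|m]] Hm]; [left|right|by []]; exact: val_inj.
Qed.

Lemma povm_diag (M : 'I_2 -> 'M[R[i]]_n) : povm M -> forall c k,
  complex.Re (M c k k) <= 1.
Proof.
move=> [hp hs] c k.
have : complex.Re ((M ord0 + M (@Ordinal 2 1 isT)) k k) = 1.
  by rewrite hs mxE eqxx.
rewrite mxE ReD.
have := psd_diag_ge0 (hp ord0) k; have := psd_diag_ge0 (hp (@Ordinal 2 1 isT)) k.
by case: (ord2_cases c) => ->; lra.
Qed.

Lemma entry_bound (A : 'M[R[i]]_n) : psdmx A -> (forall k, complex.Re (A k k) <= 1) ->
  forall i j, `|complex.Re (A i j)| <= 2 /\ `|complex.Im (A i j)| <= 2.
Proof.
move=> hA hd i j; have [h1 h2 _] := psd_bounds hA i j.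
have := hd i; have := hd j.
split; lra.
Qed.

Lemma tr_bound (M rho : 'M[R[i]]_n) : psdmx M -> (forall k, complex.Re (M k k) <= 1) ->
  density rho ->
  `|complex.Re (\tr (M *m rho))| <= \sum_(k : 'I_n) \sum_(l : 'I_n) (8 : R).
Proof.
move=> hM hMd hr.
have hrd := dens_diag hr; have [hrp _] := hr.
rewrite /mxtrace Re_sum; apply: le_trans (ler_norm_sum _ _ _) _.
apply: ler_sum => k _; rewrite mxE Re_sum; apply: le_trans (ler_norm_sum _ _ _) _.
apply: ler_sum => l _; rewrite ReM.
have [a1 a2] := entry_bound hM hMd k l.
have [b1 b2] := entry_bound hrp hrd l k.
apply: le_trans (ler_normB _ _) _; rewrite !normrM.
have : `|complex.Re (M k l)| * `|complex.Re (rho l k)| <= 2 * 2.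
  by apply: ler_pM.
have : `|complex.Im (M k l)| * `|complex.Im (rho l k)| <= 2 * 2.
  by apply: ler_pM.
lra.
Qed.

End Aux.

Section Sets.
Variables (R : realType) (n : nat).

Definition Mid : 'I_2 -> 'M[R[i]]_n := fun c => if c == ord0 then 1%:M else 0.

Lemma povm_Mid : povm Mid.
Proof.
split; last by rewrite /Mid /= addr0.
move=> c; rewrite /Mid; case: (c == ord0).
- split; first exact: hermitian1mx_subproof.
  move=> v; rewrite mulmx1 !mxE; apply: sumr_ge0 => k _; rewrite !mxE.
  exact: mul_conjC_ge0.
- split.
    by rewrite qualifE; apply/eqP/matrixP => k l; rewrite !mxE rmorph0 mulr0.
  by move=> v; rewrite mulmx0 mul0mx mxE.
Qed.

Lemma inf_le_f (f : ('I_2 -> 'M[R[i]]_n) -> R) (B : R) M : povm M ->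
  (forall M, povm M -> `|f M| <= B) -> inf [set f M | M in @povm R n] <= f M.
Proof.
move=> hM hB; apply: ge_inf; last by exists M.
exists (- B) => _ [M' hM' <-]; have := hB M' hM'; rewrite ler_norml => /andP[].
done.
Qed.

Lemma le_inf_f (f : ('I_2 -> 'M[R[i]]_n) -> R) x :
  (forall M, povm M -> x <= f M) -> x <= inf [set f M | M in @povm R n].
Proof.
move=> h; apply: lb_le_inf; first by exists (f Mid), Mid => //; apply: povm_Mid.
by move=> _ [M hM <-]; apply: h.
Qed.

Lemma sup_ge_f (f : ('I_2 -> 'M[R[i]]_n) -> R) (B : R) M : povm M ->
  (forall M, povm M -> f M <= B) -> f M <= sup [set f M | M in @povm R n].
Proof.
move=> hM hB; apply: ub_le_sup; last by exists M.
by exists B => _ [M' hM' <-]; apply: hB.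
Qed.

Lemma sup_le_f (f : ('I_2 -> 'M[R[i]]_n) -> R) (B : R) :
  (forall M, povm M -> f M <= B) -> sup [set f M | M in @povm R n] <= B.
Proof.
move=> hB; apply: ge_sup; first by exists (f Mid), Mid => //; apply: povm_Mid.
by move=> _ [M hM <-]; apply: hB.
Qed.

End Sets.

Section Main.
Variables (R : realType) (n : nat) (X : finType) (Theta : Type)
  (rho : Theta -> X -> 'M[R[i]]_n).
Hypothesis Hrho : forall th x, density (rho th x).

Definition CB : R := 1 + \sum_(k : 'I_n) \sum_(l : 'I_n) (8 : R).

Lemma CB_ge0 : 0 <= CB.
Proof.
rewrite /CB; apply: addr_ge0 => //; apply: sumr_ge0 => k _; apply: sumr_ge0 => l _.
done.
Qed.

Lemma loss_bound th M c x : povm M -> `|loss rho th M c x| <= CB.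
Proof.
move=> hM; rewrite /loss; apply: le_trans (ler_normB _ _) _; rewrite normr1.
apply: lerD => //; apply: tr_bound; last exact: Hrho.
- by case: hM => hp _; apply: hp.
- by move=> k; apply: povm_diag.
Qed.

Lemma risk_bound p th M : is_distr p -> povm M -> `|risk rho p th M| <= CB.
Proof.
move=> [hp hs] hM; rewrite /risk.
apply: le_trans (ler_norm_sum _ _ _) _.
apply: (@le_trans _ _ (\sum_(c : 'I_2) \sum_(x : X) p c x * CB)).
  apply: ler_sum => c _; apply: le_trans (ler_norm_sum _ _ _) _.
  apply: ler_sum => x _; rewrite normrM ger0_norm //.
  by apply: ler_wpM2l => //; apply: loss_bound.
rewrite (eq_bigr (fun c => (\sum_(x : X) p c x) * CB)); last by move=> c _; rewrite mulr_suml.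
by rewrite -mulr_suml hs mul1r.
Qed.

Lemma sum_const_seq (T : Type) (D : seq T) (c : R) : \sum_(s <- D) c = (size D)%:R * c.
Proof.
elim: D => [|s D IH]; first by rewrite big_nil mul0r.
by rewrite big_cons IH /= -addn1 natrD; ring.
Qed.

Lemma emp_bound D th M : povm M -> `|emprisk rho D th M| <= CB.
Proof.
move=> hM; rewrite /emprisk normrM.
have hs : `|\sum_(s <- D) loss rho th M s.1 s.2| <= (size D)%:R * CB.
  apply: le_trans (ler_norm_sum _ _ _) _; rewrite -sum_const_seq.
  by apply: ler_sum => s _; apply: loss_bound.
have [hD|hD] := eqVneq (size D) 0%N.
  by rewrite hD invr0 normr0 mul0r; apply: CB_ge0.
rewrite ger0_norm ?invr_ge0 ?ler0n //.
apply: le_trans (ler_wpM2l _ hs) _; first by rewrite invr_ge0 ler0n.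
by rewrite mulrA mulVf ?mul1r // pnatr_eq0.
Qed.

Lemma gen_ge p D th M : is_distr p -> povm M ->
  `|risk rho p th M - emprisk rho D th M| <= generr rho p D th.
Proof.
move=> hp hM; rewrite /generr.
apply: (@sup_ge_f R n (fun M => `|risk rho p th M - emprisk rho D th M|) (CB + CB)) => // M' hM'.
apply: le_trans (ler_normB _ _) _; apply: lerD; [exact: risk_bound|exact: emp_bound].
Qed.

Lemma gen_le p D th : is_distr p -> generr rho p D th <= CB + CB.
Proof.
move=> hp; rewrite /generr; apply: (@sup_le_f R n (fun M => `|risk rho p th M - emprisk rho D th M|)) => M' hM'.
apply: le_trans (ler_normB _ _) _; apply: lerD; [exact: risk_bound|exact: emp_bound].
Qed.

Lemma riskmin_le p th M : is_distr p -> povm M -> riskmin rho p th <= risk rho p th M.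
Proof.
move=> hp hM; rewrite /riskmin; apply: (@inf_le_f R n (fun M => risk rho p th M) CB) => //.
by move=> M' hM'; apply: risk_bound.
Qed.

Lemma empriskmin_le D th M : povm M -> empriskmin rho D th <= emprisk rho D th M.
Proof.
move=> hM; rewrite /empriskmin; apply: (@inf_le_f R n (fun M => emprisk rho D th M) CB) => //.
by move=> M' hM'; apply: emp_bound.
Qed.

End Main.
Section Arith.
Variable R : realType.
Lemma absP (a b g : R) : `|a - b| <= g -> a <= b + g /\ b <= a + g.
Proof. rewrite ler_norml => /andP[? ?]; split; lra. Qed.
Lemma arA (r e e' r' g : R) : r <= e + g -> e <= e' -> e' <= r' + g -> r - 2 * g <= r'.
Proof. lra. Qed.
Lemma arB1 (rh g e r : R) : rh <= r -> r <= e + g -> rh - g <= e.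
Proof. lra. Qed.
Lemma arB2 (es g e r : R) : es <= e -> e <= r + g -> es - g <= r.
Proof. lra. Qed.
Lemma arSub (x g y : R) : x - g <= y -> x <= y + g.
Proof. lra. Qed.
Lemma arSub2 (x g y : R) : x - 2 * g <= y -> x <= y + 2 * g.
Proof. lra. Qed.
Lemma fin1 (r rt rh G tdT tdS DST : R) : r <= rh + 2 * G -> rh - rt <= tdT ->
  tdT <= tdS + DST -> r - rt <= 2 * G + tdS + DST.
Proof. lra. Qed.
Lemma fin2 (G tdS DST rhs rs eh es Gh S GS : R) : tdS = rhs - rs ->
  rhs <= eh + Gh -> eh <= es -> es <= rs + GS -> Gh <= S ->
  2 * G + tdS + DST <= 2 * G + S + GS + DST.
Proof. lra. Qed.
Lemma fin3 (r rh G : R) : r <= rh + 2 * G -> r - rh <= 2 * G.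
Proof. lra. Qed.
End Arith.

Theorem lemmaB1 (R : realType) (n : nat) (X : finType) (Theta : Type)
  (rho : Theta -> X -> 'M[R[i]]_n)
  (pS pT : 'I_2 -> X -> R) (DS DT : seq ('I_2 * X))
  (thS thT thhat : Theta) (MhatT : 'I_2 -> 'M[R[i]]_n) :
  (forall th x, density (rho th x)) ->
  is_distr pS -> is_distr pT ->
  (* theta^S_* and theta^T_* minimize R^S_theta and R^T_theta *)
  (forall th, riskmin rho pS thS <= riskmin rho pS th) ->
  (forall th, riskmin rho pT thT <= riskmin rho pT th) ->
  (* hat theta minimizes min_M hat R^S_{theta,M} *)
  (forall th, empriskmin rho DS thhat <= empriskmin rho DS th) ->
  (* MhatT = hat M^T_{hat theta} minimizes hat R^T_{hat theta, M} over POVMs *)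
  povm MhatT ->
  (forall M, povm M -> emprisk rho DT thhat MhatT <= emprisk rho DT thhat M) ->
  let DeltaR := risk rho pT thhat MhatT - riskmin rho pT thT in
  ((exists th1 th2 : Theta, th1 <> th2) ->
   forall DST : R,
   (forall th, taskdist rho pT th thT <= taskdist rho pS th thS + DST) ->
   DeltaR <= 2 * generr rho pT DT thhat + taskdist rho pS thhat thS + DST /\
   2 * generr rho pT DT thhat + taskdist rho pS thhat thS + DST
     <= 2 * generr rho pT DT thhat
        + sup [set generr rho pS DS th | th in [set: Theta]]
        + generr rho pS DS thS + DST)
  /\
  (forall th0 : Theta, (forall th, th = th0) ->
   DeltaR <= 2 * generr rho pT DT th0).
Proof.
move=> Hr hS hT hthS hthT hhat hMh hMmin DeltaR.
have A : risk rho pT thhat MhatT <= riskmin rho pT thhat + 2 * generr rho pT DT thhat.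
  apply: arSub2; rewrite /riskmin; apply: le_inf_f => M hM.
  have [h1 _] := absP (gen_ge Hr DT thhat hT hMh).
  have [_ h2] := absP (gen_ge Hr DT thhat hT hM).
  exact: (arA h1 (hMmin M hM) h2).
split.
- move=> _ DST hD.
  have e1 : riskmin rho pT thhat - riskmin rho pT thT <= taskdist rho pT thhat thT.
    by rewrite /taskdist distrC; apply: ler_norm.
  have B1 : riskmin rho pS thhat <= empriskmin rho DS thhat + generr rho pS DS thhat.
    apply: arSub; rewrite /empriskmin; apply: le_inf_f => M hM.
    have [h2 _] := absP (gen_ge Hr DS thhat hS hM).
    exact: (arB1 (riskmin_le Hr thhat hS hM) h2).
  have B2 : empriskmin rho DS thS <= riskmin rho pS thS + generr rho pS DS thS.
    apply: arSub; rewrite /riskmin; apply: le_inf_f => M hM.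
    have [_ h2] := absP (gen_ge Hr DS thS hS hM).
    exact: (arB2 (empriskmin_le Hr DS thS hM) h2).
  have B3 : generr rho pS DS thhat <= sup [set generr rho pS DS th | th in [set: Theta]].
    apply: ub_le_sup; last by exists thhat.
    by exists (@CB R n + @CB R n) => _ [th _ <-]; apply: gen_le.
  have e2 : taskdist rho pS thhat thS = riskmin rho pS thhat - riskmin rho pS thS.
    rewrite /taskdist ler0_norm; first by rewrite opprB.
    by rewrite subr_le0.
  split.
    exact: (fin1 A e1 (hD thhat)).
  exact: (fin2 _ _ e2 B1 (hhat thS) B2 B3).
- move=> th0 hth0.
  have := fin3 A; rewrite /DeltaR (hth0 thT) (hth0 thhat); exact.
Qed.
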